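(* Let $(\Omega,+)$ be a group and let $a,b$ be subgroups of $\Omega$. Then the power set $\mathcal{P}$ of $\Omega$, and also its subset $\mathcal{P}^o$, are semitorsors under each of the following four ternary compositions: $(x,y,z)\mapsto (xyz)_{ab}:=\Gamma(x,a,y,b,z)$; $(x,y,z)\mapsto \check\Gamma(x,a,y,b,z)$; $(x,y,z)\mapsto (xyz)_b:=\Sigma(b,x,y,z)$; $(x,y,z)\mapsto \check\Sigma(b,x,y,z)$.
   Context: $(\Omega,+)$ is a group written additively but not necessarily abelian, with neutral element $o$. $\mathcal{P}$ is the set of all subsets of $\Omega$ and $\mathcal{P}^o$ the set of subsets containing $o$. For $x,a,y,b,z\in\mathcal{P}$: $\Gamma(x,a,y,b,z)=\{\omega\in\Omega:\exists\alpha\in a,\exists\beta\in b:\ \alpha+\omega+\beta\in y,\ \alpha+\omega\in z,\ \omega+\beta\in x\}$; $\check\Gamma(x,a,y,b,z)=\{\omega\in\Omega:\exists\alpha\in a,\exists\beta\in b:\ \beta+\omega+\alpha\in y,\ \omega+\alpha\in z,\ \beta+\omega\in x\}$; $\Sigma(b,x,y,z)=\{\omega\in\Omega:\exists\beta,\beta'\in b:\ \omega+\beta\in x,\ \omega+\beta'+\beta\in y,\ \omega+\beta'\in z\}$; $\check\Sigma(b,x,y,z)=\{\omega\in\Omega:\exists\beta,\beta'\in b:\ \beta+\omega\in x,\ \beta+\beta'+\omega\in y,\ \beta'+\omega\in z\}$. A semitorsor is a set $G$ with a map $G^3\to G$, $(x,y,z)\mapsto(xyz)$, satisfying the para-associative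 law $(xy(zuv))=(x(uzy)v)=((xyz)uv)$ for all $x,y,z,u,v\in G$. *)

(* Defs.v *)
Set Implicit Arguments.
(* Subsets of Omega are predicates Omega -> Prop; set equality
   is Leibniz equality (propositional/functional extensionality are allowed). *)

Record is_group (G : Type) (add : G -> G -> G) (opp : G -> G) (o : G) : Prop := {
  grp_assoc : forall x y z, add x (add y z) = add (add x y) z;
  grp_add0l : forall x, add o x = x;
  grp_add0r : forall x, add x o = x;
  grp_addNl : forall x, add (opp x) x = o;
  grp_addNr : forall x, add x (opp x) = o }.

Record is_subgroup (G : Type) (add : G -> G -> G) (opp : G -> G) (o : G)
  (a : G -> Prop) : Prop := {
  sg_0 : a o;
  sg_add : forall x y, a x -> a y -> a (add x y);
  sg_opp : forall x, a x -> a (opp x) }.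

Section Ops.
Variables (G : Type) (add : G -> G -> G).

Definition Gamma (x a y b z : G -> Prop) : G -> Prop := fun w =>
  exists al be, a al /\ b be /\ y (add (add al w) be) /\ z (add al w) /\ x (add w be).

Definition Gammac (x a y b z : G -> Prop) : G -> Prop := fun w =>
  exists al be, a al /\ b be /\ y (add (add be w) al) /\ z (add w al) /\ x (add be w).

Definition Sigma (b x y z : G -> Prop) : G -> Prop := fun w =>
  exists be be', b be /\ b be' /\ x (add w be) /\ y (add (add w be') be) /\ z (add w be').

Definition Sigmac (b x y z : G -> Prop) : G -> Prop := fun w =>
  exists be be', b be /\ b be' /\ x (add be w) /\ y (add (add be be') w) /\ z (add be' w).
End Ops.

Definition semitorsor_on (T : Type) (S : T -> Prop) (m : T -> T -> T -> T) : Prop :=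
  (forall x y z, S x -> S y -> S z -> S (m x y z)) /\
  (forall x y z u v, S x -> S y -> S z -> S u -> S v ->
     m x y (m z u v) = m x (m u z y) v /\ m x (m u z y) v = m (m x y z) u v).

Definition allP (G : Type) : (G -> Prop) -> Prop := fun _ => True.
Definition Po (G : Type) (o : G) : (G -> Prop) -> Prop := fun x => x o.

(* Main.v *)
Require Import Defs.
From Stdlib Require Import FunctionalExtensionality PropExtensionality.

Lemma sext (G : Type) (P Q : G -> Prop) : (forall w, P w <-> Q w) -> P = Q.
Proof. intro H; apply functional_extensionality; intro w;
  apply propositional_extensionality; apply H. Qed.

Lemma mem_eq (G : Type) (P : G -> Prop) (s t : G) : P s -> s = t -> P t.
Proof. intros H E; subst; exact H. Qed.
Arguments mem_eq {G P s t}.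

Section Gen.
Variables (G : Type) (add : G -> G -> G) (opp : G -> G) (o : G).
Hypothesis HG : is_group add opp o.
Variables (a b : G -> Prop).
Hypothesis Ha : is_subgroup add opp o a.
Hypothesis Hb : is_subgroup add opp o b.

Local Notation "x +' y" := (add x y) (at level 50, left associativity).

Lemma assocR x y z : x +' y +' z = x +' (y +' z).
Proof. symmetry; apply (grp_assoc HG). Qed.
Lemma canc1 x y : opp x +' (x +' y) = y.
Proof. rewrite (grp_assoc HG), (grp_addNl HG); apply (grp_add0l HG). Qed.
Lemma canc2 x y : x +' (opp x +' y) = y.
Proof. rewrite (grp_assoc HG), (grp_addNr HG); apply (grp_add0l HG). Qed.
Lemma aNl x : opp x +' x = o. Proof. apply (grp_addNl HG). Qed.
Lemma aNr x : x +' opp x = o. Proof. apply (grp_addNr HG). Qed.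
Lemma a0l x : o +' x = x. Proof. apply (grp_add0l HG). Qed.
Lemma a0r x : x +' o = x. Proof. apply (grp_add0r HG). Qed.

Ltac gn := repeat (rewrite ?assocR, ?canc1, ?canc2, ?aNl, ?aNr, ?a0l, ?a0r).
Ltac mm H := apply (mem_eq H); gn; reflexivity.
Ltac insg := repeat first [assumption | apply (sg_0 Ha) | apply (sg_0 Hb)
  | apply (sg_add Ha) | apply (sg_add Hb) | apply (sg_opp Ha) | apply (sg_opp Hb)].

Definition CG x y z u v : G -> Prop := fun w => exists a1 a2 b1 b2,
  a a1 /\ a a2 /\ b b1 /\ b b2 /\ x (w +' b1) /\ y (a1 +' w +' b1) /\
  z (a1 +' w +' b2) /\ u (a2 +' w +' b2) /\ v (a2 +' w).

Lemma GL x y z u v : Gamma add x a y b (Gamma add z a u b v) = CG x y z u v.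
Proof.
  apply sext; intro w; split.
  - intros (al & be & Hal & Hbe & Hy & (al' & be' & Hal' & Hbe' & Hu & Hv & Hz) & Hx).
    exists al, (al' +' al), be, be'; repeat split; insg; first [mm Hx|mm Hy|mm Hz|mm Hu|mm Hv].
  - intros (a1 & a2 & b1 & b2 & H1 & H2 & H3 & H4 & Hx & Hy & Hz & Hu & Hv).
    exists a1, b1; repeat split; insg; try (mm Hx); try (mm Hy).
    exists (a2 +' opp a1), b2; repeat split; insg; first [mm Hz|mm Hu|mm Hv].
Qed.

Lemma GR1 x y z u v : Gamma add x a (Gamma add u a z b y) b v = CG x y z u v.
Proof.
  apply sext; intro w; split.
  - intros (al & be & Hal & Hbe & (al' & be' & Hal' & Hbe' & Hz & Hy & Hu) & Hv & Hx).
    exists (al' +' al), al, be, (be +' be'); repeat split; insg; first [mm Hx|mm Hy|mm Hz|mm Hu|mm Hv].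
  - intros (a1 & a2 & b1 & b2 & H1 & H2 & H3 & H4 & Hx & Hy & Hz & Hu & Hv).
    exists a2, b1; repeat split; insg; try (mm Hx); try (mm Hv).
    exists (a1 +' opp a2), (opp b1 +' b2); repeat split; insg; first [mm Hz|mm Hu|mm Hy].
Qed.

Lemma GR2 x y z u v : Gamma add (Gamma add x a y b z) a u b v = CG x y z u v.
Proof.
  apply sext; intro w; split.
  - intros (al & be & Hal & Hbe & Hu & Hv & (al' & be' & Hal' & Hbe' & Hy & Hz & Hx)).
    exists al', al, (be +' be'), be; repeat split; insg; first [mm Hx|mm Hy|mm Hz|mm Hu|mm Hv].
  - intros (a1 & a2 & b1 & b2 & H1 & H2 & H3 & H4 & Hx & Hy & Hz & Hu & Hv).
    exists a2, b2; repeat split; insg; try (mm Hu); try (mm Hv).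
    exists a1, (opp b2 +' b1); repeat split; insg; first [mm Hz|mm Hx|mm Hy].
Qed.

Lemma Gamma_semi S : (forall x y z, S x -> S y -> S z -> S (Gamma add x a y b z)) ->
  semitorsor_on S (fun x y z => Gamma add x a y b z).
Proof.
  intro H; split; [exact H|]. intros; rewrite GL, GR1, GR2; auto.
Qed.

Lemma Gamma_Po : semitorsor_on (Po o) (fun x y z => Gamma add x a y b z).
Proof.
  apply Gamma_semi; unfold Po; intros x y z Hx Hy Hz.
  exists o, o; repeat split; insg; first [mm Hx|mm Hy|mm Hz].
Qed.

Definition CS x y z u v : G -> Prop := fun w => exists b1 b2 b3 b4,
  b b1 /\ b b2 /\ b b3 /\ b b4 /\ x (w +' b1) /\ y (w +' b2 +' b1) /\
  z (w +' b2 +' b3) /\ u (w +' b4 +' b3) /\ v (w +' b4).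

Lemma SL x y z u v : Sigma add b x y (Sigma add b z u v) = CS x y z u v.
Proof.
  apply sext; intro w; split.
  - intros (be & be' & Hbe & Hbe' & Hx & Hy & (c & c' & Hc & Hc' & Hz & Hu & Hv)).
    exists be, be', c, (be' +' c'); repeat split; insg; first [mm Hx|mm Hy|mm Hz|mm Hu|mm Hv].
  - intros (b1 & b2 & b3 & b4 & H1 & H2 & H3 & H4 & Hx & Hy & Hz & Hu & Hv).
    exists b1, b2; repeat split; insg; try (mm Hx); try (mm Hy).
    exists b3, (opp b2 +' b4); repeat split; insg; first [mm Hz|mm Hu|mm Hv].
Qed.

Lemma SR1 x y z u v : Sigma add b x (Sigma add b u z y) v = CS x y z u v.
Proof.
  apply sext; intro w; split.
  - intros (be & be' & Hbe & Hbe' & Hx & (c & c' & Hc & Hc' & Hu & Hz & Hy) & Hv).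
    exists be, (be' +' be +' c' +' opp be), (be +' c), be'; repeat split; insg;
      first [mm Hx|mm Hy|mm Hz|mm Hu|mm Hv].
  - intros (b1 & b2 & b3 & b4 & H1 & H2 & H3 & H4 & Hx & Hy & Hz & Hu & Hv).
    exists b1, b4; repeat split; insg; try (mm Hx); try (mm Hv).
    exists (opp b1 +' b3), (opp b1 +' opp b4 +' b2 +' b1); repeat split; insg;
      first [mm Hz|mm Hu|mm Hy].
Qed.

Lemma SR2 x y z u v : Sigma add b (Sigma add b x y z) u v = CS x y z u v.
Proof.
  apply sext; intro w; split.
  - intros (be & be' & Hbe & Hbe' & (c & c' & Hc & Hc' & Hx & Hy & Hz) & Hu & Hv).
    exists (be +' c), (be +' c' +' opp be), be, be'; repeat split; insg;
      first [mm Hx|mm Hy|mm Hz|mm Hu|mm Hv].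
  - intros (b1 & b2 & b3 & b4 & H1 & H2 & H3 & H4 & Hx & Hy & Hz & Hu & Hv).
    exists b3, b4; repeat split; insg; try (mm Hu); try (mm Hv).
    exists (opp b3 +' b1), (opp b3 +' b2 +' b3); repeat split; insg;
      first [mm Hz|mm Hx|mm Hy].
Qed.

Lemma Sigma_semi S : (forall x y z, S x -> S y -> S z -> S (Sigma add b x y z)) ->
  semitorsor_on S (fun x y z => Sigma add b x y z).
Proof.
  intro H; split; [exact H|]. intros; rewrite SL, SR1, SR2; auto.
Qed.

Lemma Sigma_Po : semitorsor_on (Po o) (fun x y z => Sigma add b x y z).
Proof.
  apply Sigma_semi; unfold Po; intros x y z Hx Hy Hz.
  exists o, o; repeat split; insg; first [mm Hx|mm Hy|mm Hz].
Qed.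

End Gen.

Lemma opp_group (G : Type) (add : G -> G -> G) (opp : G -> G) (o : G) :
  is_group add opp o -> is_group (fun p q => add q p) opp o.
Proof.
  intros []; split; intros; auto.
Qed.

Lemma opp_sub (G : Type) (add : G -> G -> G) (opp : G -> G) (o : G) a :
  is_subgroup add opp o a -> is_subgroup (fun p q => add q p) opp o a.
Proof. intros []; split; auto. Qed.

Lemma Gammac_eq (G : Type) (add : G -> G -> G) (opp : G -> G) (o : G) a b :
  is_group add opp o ->
  (fun x y z => Gammac add x a y b z) = (fun x y z => Gamma (fun p q => add q p) x a y b z).
Proof.
  intro HG. do 3 (apply functional_extensionality; intro).
  unfold Gammac, Gamma. apply sext; intro w.
  split; intros (p & q & H1 & H2 & H3 & H4 & H5); exists p, q;
    repeat split; auto;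
    first [ apply (mem_eq H3); apply (grp_assoc HG)
          | apply (mem_eq H3); symmetry; apply (grp_assoc HG)
          | apply (mem_eq H4); apply (grp_assoc HG)
          | apply (mem_eq H4); symmetry; apply (grp_assoc HG) ].
Qed.

Lemma Sigmac_eq (G : Type) (add : G -> G -> G) (opp : G -> G) (o : G) b :
  is_group add opp o ->
  (fun x y z => Sigmac add b x y z) = (fun x y z => Sigma (fun p q => add q p) b x y z).
Proof.
  intro HG. do 3 (apply functional_extensionality; intro).
  unfold Sigmac, Sigma. apply sext; intro w.
  split; intros (p & q & H1 & H2 & H3 & H4 & H5); exists p, q;
    repeat split; auto;
    first [ apply (mem_eq H3); apply (grp_assoc HG)
          | apply (mem_eq H3); symmetry; apply (grp_assoc HG)
          | apply (mem_eq H4); apply (grp_assoc HG)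
          | apply (mem_eq H4); symmetry; apply (grp_assoc HG) ].
Qed.

Theorem theorem3p1 (G : Type) (add : G -> G -> G) (opp : G -> G) (o : G)
  (HG : is_group add opp o) (a b : G -> Prop)
  (Ha : is_subgroup add opp o a) (Hb : is_subgroup add opp o b) :
  (semitorsor_on (@allP G) (fun x y z => Gamma add x a y b z) /\
   semitorsor_on (Po o) (fun x y z => Gamma add x a y b z)) /\
  (semitorsor_on (@allP G) (fun x y z => Gammac add x a y b z) /\
   semitorsor_on (Po o) (fun x y z => Gammac add x a y b z)) /\
  (semitorsor_on (@allP G) (fun x y z => Sigma add b x y z) /\
   semitorsor_on (Po o) (fun x y z => Sigma add b x y z)) /\
  (semitorsor_on (@allP G) (fun x y z => Sigmac add b x y z) /\
   semitorsor_on (Po o) (fun x y z => Sigmac add b x y z)).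
Proof.
  pose proof (@opp_group _ _ _ _ HG) as HG'.
  pose proof (@opp_sub _ _ _ _ _ Ha) as Ha'. pose proof (@opp_sub _ _ _ _ _ Hb) as Hb'.
  rewrite (@Gammac_eq _ _ _ _ a b HG), (@Sigmac_eq _ _ _ _ b HG).
  refine (conj (conj _ _) (conj (conj _ _) (conj (conj _ _) (conj _ _))));
  first [ apply (@Gamma_semi _ _ _ _ HG _ _ Ha Hb); now intros
        | apply (@Gamma_Po _ _ _ _ HG _ _ Ha Hb)
        | apply (@Gamma_semi _ _ _ _ HG' _ _ Ha' Hb'); now intros
        | apply (@Gamma_Po _ _ _ _ HG' _ _ Ha' Hb')
        | apply (@Sigma_semi _ _ _ _ HG _ Hb); now intros
        | apply (@Sigma_Po _ _ _ _ HG _ Hb)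
        | apply (@Sigma_semi _ _ _ _ HG' _ Hb'); now intros
        | apply (@Sigma_Po _ _ _ _ HG' _ Hb') ].
Qed.
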